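(* Let $q\in(0,1]$, $\eta\in(0,1]$, $R_0^*>0$, $m_1>0$. Assume [A12]: (i) for every $T\in\mathbb T$, $\mathbb H_T$ is almost surely thrice differentiable in $\theta$ on $B^*=\{\theta\in\Theta:|\theta-\theta^*|<R_0^*\}$; (ii) $\sup_{T}E[\|a_T\|^{m_1}|\partial_\theta\mathbb H_T(\theta^* )|^{m_1}]<\infty$; (iii) $\sup_{T}E[\|a_T\|^{2m_1}\sup_{\theta\in B^*}|\partial_\theta^2\mathbb H_T(\theta)|^{m_1}]<\infty$; (iv) $\sup_{T}E[\|a_T\|^{2m_1}\sup_{\theta\in B^*}|\partial_\theta^3\mathbb H_T(\theta)|^{m_1}]<\infty$ (suprema over $T\in\mathbb T$). Then for every $m_2>0$ there exist constants $R_0>0$ and $K>0$ such that $$c_T\Bigl(\frac{m_1m_2}{qm_1+m_2},R_0\Bigr)\le K\|a_T\|^{-\frac{\eta(2-q)m_1m_2}{qm_1+m_2}}\bigl(E[\|G_T^{(00)}\|^{m_2}]\bigr)^{\frac{qm_1}{qm_1+m_2}}$$ for every $T\in\mathbb T$ with $\|a_T\|\le1$.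
   Context: Let $\Theta\subset\mathbb R^{\mathsf p}$ be a bounded open set with closure $\overline\Theta$ and $\theta^*\in\Theta$. Let $(\Omega,\mathcal F,P)$ be a probability space, $\mathbb T\subset\mathbb R_{\ge0}$ with $\sup\mathbb T=\infty$. For each $T\in\mathbb T$, $\mathbb H_T:\Omega\times\overline\Theta\to\mathbb R$ is a random field continuous in $\theta$ for every $\omega$; $\partial_\theta^k\mathbb H_T$ denotes its $k$-th derivative tensor. Penalty weights $\xi_T^j>0$ ($j=1,\dots,\mathsf p$) are (possibly random). $\mathcal J^{(0)}=\{j:\theta^*_j=0\}$, $\mathcal J^{(1)}=\{j:\theta^*_j\ne0\}$; $A^{(00)}=(A_{ij})_{i,j\in\mathcal J^{(0)}}$. $a_T=\mathrm{diag}(\alpha_T^1,\dots,\alpha_T^{\mathsf p})$ is deterministic, invertible, with $\|a_T\|\to0$ ($\|\cdot\|$ spectral norm); $\mathbb U_T=\{u:\theta^*+a_Tu\in\overline\Theta\}$. $\tilde a_T$ is diagonal with $(\tilde a_T)_{jj}=(\xi_T^j)^{-1/q}$ for $j\in\mathcal J^{(0)}$ and $\alpha_T^j$ for $j\in\mathcal J^{(1)}$; $G_T=a_T^{-1}\tilde a_T$. For $R>0$, $\mathsf c_{T,R}=\sup\frac{|\mathbb H_T(\theta^*+a_Tu)-\mathbb H_T(\theta^*+a_Tv)|}{|u-v|^q}$ over $u,v\in\mathbb U_T$, $u\ne v$, $|a_Tu|,|a_Tv|<R\|a_T\|^{1-\eta}$; for $m>0$, $c_T(m,R)=E[|\mathsf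 c_{T,R}|^{m}\|G_T^{(00)}\|^{qm}]$ (possibly $\infty$). *)

(* Defs.v *)
From HB Require Import structures.
From mathcomp Require Import all_boot all_order all_algebra.
From mathcomp Require Import all_classical all_reals all_analysis.
From mathcomp Require Import lebesgue_measure measurable_realfun.
Set Implicit Arguments. Unset Strict Implicit. Unset Printing Implicit Defensive.
Import Order.TTheory GRing.Theory Num.Theory.
Import numFieldNormedType.Exports.
Local Open Scope classical_set_scope.
Local Open Scope ring_scope.

Definition enorm {R : realType} {n : nat} (x : 'rV[R]_n) : R :=
  Num.sqrt (\sum_(i < n) x 0 i ^+ 2).

Definition opnorm {R : realType} {n : nat} (A : 'M[R]_n) : R :=
  sup [set enorm (x *m A) | x in [set x : 'rV[R]_n | enorm x <= 1]].

Definition pderiv {R : realType} {p : nat} (f : 'rV[R]_p -> R) (i : 'I_p)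
  : 'rV[R]_p -> R := fun x => derive f x (delta_mx 0 i).

Definition thrice_diff_on {R : realType} {p : nat} (B : set 'rV[R]_p)
  (f : 'rV[R]_p -> R) : Prop :=
  forall x, B x ->
    [/\ differentiable f x,
        forall i, differentiable (pderiv f i) x &
        forall i j, differentiable (pderiv (pderiv f i) j) x].

Definition dnorm1 {R : realType} {p : nat} (f : 'rV[R]_p -> R) x : R :=
  Num.sqrt (\sum_(i < p) (pderiv f i x) ^+ 2).
Definition dnorm2 {R : realType} {p : nat} (f : 'rV[R]_p -> R) x : R :=
  Num.sqrt (\sum_(i < p) \sum_(j < p) (pderiv (pderiv f i) j x) ^+ 2).
Definition dnorm3 {R : realType} {p : nat} (f : 'rV[R]_p -> R) x : R :=
  Num.sqrt (\sum_(i < p) \sum_(j < p) \sum_(k < p)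
              (pderiv (pderiv (pderiv f i) j) k x) ^+ 2).

Definition J0 {R : realType} {p : nat} (ts : 'rV[R]_p) : {set 'I_p} :=
  [set j | ts 0 j == 0].

Definition atilde {R : realType} {p : nat} (ts : 'rV[R]_p) (q : R)
  (xi alpha : 'I_p -> R) : 'M[R]_p :=
  diag_mx (\row_j (if ts 0 j == 0 then powR (xi j) (- q^-1) else alpha j)).

Definition Gmat {R : realType} {p : nat} (ts : 'rV[R]_p) (q : R)
  (xi alpha : 'I_p -> R) : 'M[R]_p :=
  invmx (diag_mx (\row_j alpha j)) *m atilde ts q xi alpha.

Definition G00 {R : realType} {p : nat} (ts : 'rV[R]_p) (q : R)
  (xi alpha : 'I_p -> R) : 'M[R]_(#|J0 ts|) :=
  mxsub (@enum_val _ (mem (J0 ts))) (@enum_val _ (mem (J0 ts)))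
        (Gmat ts q xi alpha).

(* c_{T,R} for a single realization h = H_T(omega, .) *)
Definition cTR {R : realType} {p : nat} (Theta : set 'rV[R]_p)
  (ts : 'rV[R]_p) (alpha : 'I_p -> R) (q eta Rr : R) (h : 'rV[R]_p -> R)
  : \bar R :=
  let a := diag_mx (\row_j alpha j) in
  let inU u := closure Theta (ts + u *m a) /\
               enorm (u *m a) < Rr * powR (opnorm a) (1 - eta) in
  ereal_sup [set c | exists u v : 'rV[R]_p,
     [/\ u != v, inU u, inU v &
       c = ((`|h (ts + u *m a) - h (ts + v *m a)|
              / powR (enorm (u - v)) q)%:E)]].

Definition cT {R : realType} {d : measure_display} {Omega : measurableType d}
  (P : probability Omega R) {p : nat} (Theta : set 'rV[R]_p)
  (ts : 'rV[R]_p) (alpha : 'I_p -> R) (xi : Omega -> 'I_p -> R)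
  (H : Omega -> 'rV[R]_p -> R) (q eta m Rr : R) : \bar R :=
  (\int[P]_w (poweR `|cTR Theta ts alpha q eta Rr (H w)|%E m
                * (powR (opnorm (G00 ts q (xi w) alpha)) (q * m))%:E))%E.

(* Main.v *)
Require Import Defs.
From HB Require Import structures.
From mathcomp Require Import all_boot all_order all_algebra.
From mathcomp Require Import all_classical all_reals all_analysis.
From mathcomp Require Import lebesgue_measure measurable_realfun.
Import Order.TTheory GRing.Theory Num.Theory.
Import numFieldNormedType.Exports.
Local Open Scope classical_set_scope.
Local Open Scope ring_scope.

From mathcomp Require Import ring lra.
Set Implicit Arguments. Unset Strict Implicit.

Section LA.
Variable R : realType.

Lemma enorm_ge0 n (x : 'rV[R]_n) : 0 <= enorm x.
Proof. exact: sqrtr_ge0. Qed.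

Lemma enorm_coord n (x : 'rV[R]_n) i : `|x 0 i| <= enorm x.
Proof.
rewrite /enorm -sqrtr_sqr ler_sqrt ?sumr_ge0// => [|j _]; last exact: sqr_ge0.
by rewrite (bigD1 i)//= lerDl sumr_ge0// => j _; exact: sqr_ge0.
Qed.

Lemma enorm_pos n (u v : 'rV[R]_n) : u != v -> 0 < enorm (u - v).
Proof.
move=> uv; have [i ui] : exists i, u 0 i != v 0 i.
  apply/existsP; apply: contraNT uv => /existsPn H; apply/eqP/rowP => i.
  by move: (H i); rewrite negbK => /eqP.
apply: (lt_le_trans _ (enorm_coord _ i)).
by rewrite !mxE normr_gt0 subr_eq0.
Qed.

Definition mxabs n (d : 'rV[R]_n) : R := \big[Num.max/0]_(j < n) `|d 0 j|.

Lemma mxabs_ge0 n (d : 'rV[R]_n) : 0 <= mxabs d.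
Proof.
rewrite /mxabs; elim/big_ind: _ => //= x y x0 y0.
by rewrite le_max x0.
Qed.

Lemma mxabs_ub n (d : 'rV[R]_n) j : `|d 0 j| <= mxabs d.
Proof. exact: le_bigmax. Qed.

Lemma enorm_diag n (x d : 'rV[R]_n) : enorm (x *m diag_mx d) <= mxabs d * enorm x.
Proof.
rewrite /enorm.
have -> : mxabs d * Num.sqrt (\sum_(i < n) x 0 i ^+ 2) =
    Num.sqrt (mxabs d ^+ 2 * \sum_(i < n) x 0 i ^+ 2).
  by rewrite sqrtrM ?sqr_ge0 // sqrtr_sqr ger0_norm // mxabs_ge0.
rewrite ler_sqrt; last by rewrite mulr_ge0 ?sqr_ge0 ?sumr_ge0// => j _; exact: sqr_ge0.
rewrite mulr_sumr; apply: ler_sum => j _.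
rewrite mul_mx_diag !mxE exprMn mulrC ler_wpM2r ?sqr_ge0//.
rewrite -[_ ^+ 2]real_normK ?num_real// -[X in _ <= X]real_normK ?num_real//.
rewrite ler_pXn2r ?nnegrE// ?(ger0_norm (mxabs_ge0 d)) ?mxabs_ub // mxabs_ge0.
Qed.

Lemma enorm_delta n (j : 'I_n) : enorm (delta_mx 0 j : 'rV[R]_n) = 1.
Proof.
rewrite /enorm (bigD1 j)//= big1 ?addr0 => [|i ij]; first by rewrite mxE !eqxx expr1n sqrtr1.
by rewrite mxE eqxx /= (negbTE ij) expr0n.
Qed.

Lemma opnorm_diag n (d : 'rV[R]_n) : opnorm (diag_mx d) = mxabs d.
Proof.
set S := [set enorm (x *m diag_mx d) | x in [set x : 'rV[R]_n | enorm x <= 1]].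
have Sub : ubound S (mxabs d).
  move=> _ [x /= x1 <-]; apply: (le_trans (enorm_diag x d)).
  by rewrite -[X in _ <= X]mulr1 ler_wpM2l ?mxabs_ge0.
have S0 : S !=set0.
  exists (enorm (0 *m diag_mx d)); exists 0 => //=.
  by rewrite /enorm big1 ?sqrtr0// => i _; rewrite mxE expr0n.
have supub x : S x -> x <= sup S.
  by move=> Sx; exact: (sup_upper_bound (conj S0 (ex_intro _ _ Sub))).

have e0 : enorm (0 : 'rV[R]_n) = 0.
  by rewrite /enorm big1 ?sqrtr0// => i _; rewrite mxE expr0n.
apply/eqP; rewrite eq_le; apply/andP; split; first exact: ge_sup.
rewrite /mxabs; apply: bigmax_le => [|j _].
  apply: (le_trans (enorm_ge0 (0 *m diag_mx d)) (supub _ _)).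
  by exists 0 => //=; rewrite e0.
apply: (le_trans _ (supub _ _)); last first.
  by exists (delta_mx 0 j) => //=; rewrite enorm_delta.
rewrite /enorm (bigD1 j)//= big1 ?addr0 => [|i ij]; last first.
  by rewrite mul_mx_diag !mxE (negbTE ij) mul0r expr0n.
by rewrite mul_mx_diag !mxE !eqxx mul1r sqrtr_sqr.
Qed.

End LA.
Section Calc.
Variable R : realType.

Lemma mvt_vec p (f : 'rV[R]_p -> R) (x y : 'rV[R]_p) :
  (forall t, 0 <= t <= 1 -> differentiable f (x + t *: (y - x))) ->
  exists t, 0 <= t <= 1 /\
    f y - f x = \sum_i (y - x) 0 i * pderiv f i (x + t *: (y - x)).
Proof.
move=> df; set d := y - x; set g := fun t : R => f (x + t *: d).
have E t : (fun h : R => h^-1 *: (g (h *: 1 + t) - g t)) =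
    (fun h => h^-1 *: (f (h *: d + (x + t *: d)) - f (x + t *: d))).
  apply/funext => h; rewrite /g; congr (_ *: (f _ - _)).
  by rewrite -[h *: (1:R)]/(h * 1) mulr1 scalerDl addrCA.
have gder t : 0 <= t <= 1 -> derivable g t 1.
  by move=> t01; rewrite /derivable E; exact: diff_derivable (df _ t01).
have gD t : 'D_1 g t = 'D_d f (x + t *: d).
  by rewrite /derive E.
have [c c01 Hc] : exists2 c, c \in `[0, 1]%R & g 1 - g 0 = 'D_d f (x + c *: d) * (1 - 0).
  apply: MVT_segment => //.
  - move=> t; rewrite in_itv /= => /andP[t0 t1].
    apply: DeriveDef; first by apply: gder; rewrite !ltW.
    exact: gD.
  - apply: continuous_in_subspaceT => t; rewrite inE /= in_itv /= => t01.
    exact/differentiable_continuous/derivable1_diffP/gder.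
exists c; split; first by move: c01; rewrite in_itv.
move: Hc; rewrite /g scale1r scale0r addr0 subr0 mulr1 /d (addrC x) subrK => ->.
have c01' : 0 <= c <= 1 by move: c01; rewrite in_itv.
rewrite deriveE; last exact: df.
set z := x + c *: (y - x).
have -> : 'd f z (y - x) = 'd f z (\sum_(j < p) (y - x) 0 j *: delta_mx 0 j).
  by rewrite -row_sum_delta.
rewrite linear_sum; apply: eq_bigr => i _.
rewrite linearZ /= /pderiv deriveE //; exact: df.
Qed.

End Calc.
Section Lip.
Variable R : realType.
Variable p : nat.
Implicit Types (x y z ts : 'rV[R]_p).

Definition box ts (r : R) z := forall i, `|z 0 i - ts 0 i| < r.

Lemma box_seg ts r x y t : box ts r x -> box ts r y -> 0 <= t <= 1 ->
  box ts r (x + t *: (y - x)).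
Proof.
move=> bx by_ /andP[t0 t1] i; rewrite !mxE.
have -> : x 0 i + t * (y 0 i - x 0 i) - ts 0 i =
  (1 - t) * (x 0 i - ts 0 i) + t * (y 0 i - ts 0 i) by ring.
apply: (le_lt_trans (ler_normD _ _)); rewrite !normrM (ger0_norm t0) ger0_norm; last by lra.
have ha := bx i; have hb := by_ i.
set a := `|x 0 i - ts 0 i| in ha *; set b := `|y 0 i - ts 0 i| in hb *.
have a0 : 0 <= a by exact: normr_ge0.
have b0 : 0 <= b by exact: normr_ge0.
have -> : r = (1 - t) * r + t * r by ring.
have [t1'|t1'] := ltP t 1.
  apply: ltr_leD; first by rewrite ltr_pM2l ?subr_gt0.
  by rewrite ler_wpM2l // ltW.
have -> : t = 1 by apply/eqP; rewrite eq_le t1 t1'.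
by rewrite subrr !mul0r !add0r !mul1r.
Qed.

Lemma box_ts ts r : 0 < r -> box ts r ts.
Proof. by move=> r0 i; rewrite subrr normr0. Qed.

Lemma coord_le_sqrt1 (F : 'I_p -> R) i : `|F i| <= Num.sqrt (\sum_i F i ^+ 2).
Proof.
rewrite -sqrtr_sqr ler_sqrt ?sumr_ge0// => [|j _]; last exact: sqr_ge0.
by rewrite (bigD1 i)//= lerDl sumr_ge0// => j _; exact: sqr_ge0.
Qed.

Lemma coord_le_sqrt2 (F : 'I_p -> 'I_p -> R) i j :
  `|F i j| <= Num.sqrt (\sum_i \sum_j F i j ^+ 2).
Proof.
rewrite -sqrtr_sqr ler_sqrt; last first.
  by apply: sumr_ge0 => k _; apply: sumr_ge0 => l _; exact: sqr_ge0.
rewrite (bigD1 i)//= (bigD1 j)//= -addrA lerDl addr_ge0 ?sumr_ge0// => k _.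
  exact: sqr_ge0.
by apply: sumr_ge0 => l _; exact: sqr_ge0.
Qed.

Lemma sum_abs_bound (c d : 'I_p -> R) M K :
  (forall i, `|c i| <= M) -> (forall i, `|d i| <= K) ->
  `|\sum_i c i * d i| <= p%:R * M * K.
Proof.
move=> hc hd; apply: (le_trans (ler_norm_sum _ _ _)).
apply: (le_trans (y := \sum_(i < p) M * K)).
  by apply: ler_sum => i _; rewrite normrM; apply: ler_pM.
by rewrite sumr_const card_ord -mulrA mulr_natl.
Qed.

Lemma lip_bound (h : 'rV[R]_p -> R) ts (Bx : set 'rV[R]_p) (r S2 : R) :
  0 < r -> (forall z, box ts r z -> Bx z) -> thrice_diff_on Bx h ->
  (forall z, Bx z -> dnorm2 h z <= S2) ->
  forall x y, box ts r x -> box ts r y ->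
  `|h x - h y| <= p%:R * (dnorm1 h ts + p%:R * r * S2) * enorm (x - y).
Proof.
move=> r0 hB hd hS.
have grad z : box ts r z -> forall i, `|pderiv h i z| <= dnorm1 h ts + p%:R * r * S2.
  move=> bz i.
  have [t [t01 E]] := @mvt_vec R p (pderiv h i) ts z (fun t t01 =>
    let: And3 _ H2 _ := hd _ (hB _ (box_seg (box_ts ts r0) bz t01)) in H2 i).
  have -> : pderiv h i z = pderiv h i ts + (pderiv h i z - pderiv h i ts) by ring.
  apply: (le_trans (ler_normD _ _)); apply: lerD.
    exact: (coord_le_sqrt1 (fun i => pderiv h i ts)).
  rewrite E; apply: sum_abs_bound => j.
    by rewrite !mxE; apply: ltW; exact: bz.
  set w := ts + t *: (z - ts).
  have Bw : Bx w by apply: hB; exact: box_seg (box_ts ts r0) bz t01.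
  apply: le_trans (hS _ Bw).
  exact: (coord_le_sqrt2 (fun i j => pderiv (pderiv h i) j w)).
move=> x y bx by_.
have [t [t01 E]] := @mvt_vec R p h y x (fun t t01 =>
    let: And3 H1 _ _ := hd _ (hB _ (box_seg by_ bx t01)) in H1).
rewrite E -mulrA (mulrC _ (enorm _)) mulrA.
apply: sum_abs_bound => i; first exact: enorm_coord.
by apply: grad; exact: box_seg.
Qed.

End Lip.

Section Alg.
Variable R : realType.

Lemma powRDp (A a b : R) : 0 < A -> A `^ (a + b) = A `^ a * A `^ b.
Proof. by move=> A0; rewrite powRD // (gt_eqF A0) implybT. Qed.

Lemma sum_le_powR (a b m : R) : 0 <= a -> 0 <= b -> 0 < m ->
  a + b <= 2 * (a `^ m + b `^ m) `^ m^-1.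
Proof.
move=> a0 b0 m0.
have H x : 0 <= x -> x = (x `^ m) `^ m^-1.
  by move=> x0; rewrite -powRrM mulfV ?gt_eqF // powRr1.
have Ha : a <= (a `^ m + b `^ m) `^ m^-1.
  rewrite {1}(H a a0); apply: ge0_ler_powR; rewrite ?nnegrE ?invr_ge0 ?(ltW m0) ?powR_ge0 ?addr_ge0 ?powR_ge0 //.
  by rewrite lerDl powR_ge0.
have Hb : b <= (a `^ m + b `^ m) `^ m^-1.
  rewrite {1}(H b b0); apply: ge0_ler_powR; rewrite ?nnegrE ?invr_ge0 ?(ltW m0) ?powR_ge0 ?addr_ge0 ?powR_ge0 //.
  by rewrite lerDr powR_ge0.
lra.
Qed.

Lemma alg_bound (A R0 eta q m1 p D1 S2 : R) :
  0 < A <= 1 -> 0 < R0 <= 1 -> 0 < eta <= 1 -> 0 < q <= 1 -> 0 < m1 ->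
  1 <= p -> 0 <= D1 -> 0 <= S2 ->
  p * (D1 + p * (R0 * A `^ (1 - eta)) * S2) *
    (2 * p * (R0 * A `^ (1 - eta))) `^ (1 - q) * A `^ q <=
  4 * p ^+ 3 * A `^ (- (eta * (2 - q))) *
    (A `^ m1 * D1 `^ m1 + A `^ (2 * m1) * S2 `^ m1) `^ m1^-1.
Proof.
move=> /andP[A0 A1] /andP[R00 R01] /andP[e0 e1] /andP[q0 q1] m10 p1 D10 S20.
set s := A `^ (1 - eta).
have s0 : 0 < s by rewrite powR_gt0.
have s1 : s <= 1.
  have h : 0 <= 1 - eta by lra.
  have A01 : 0 < A <= 1 by rewrite A0 A1.
  by have := ger_powR A01 h; rewrite powRr0.
set r := R0 * s.
have r0 : 0 < r by rewrite mulr_gt0.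
have rs : r <= s by rewrite /r ler_piMl // ltW.
have e2 : (2 * p * r) `^ (1 - q) <= 2 * p * r `^ (1 - q).
  rewrite powRM; [|lra|exact: ltW].
  by rewrite ler_wpM2r ?powR_ge0 // ler1_powR //; lra.
have e3 : r `^ (1 - q) <= s `^ (1 - q).
  by rewrite ge0_ler_powR ?nnegrE ?(ltW r0) ?(ltW s0) // subr_ge0.
have Aq0 : 0 <= A `^ q by rewrite powR_ge0.
have sq0 : 0 <= s `^ (1 - q) by rewrite powR_ge0.
have rq0 : 0 <= r `^ (1 - q) by rewrite powR_ge0.
set E := - (eta * (2 - q)).
have T1 : D1 * s `^ (1 - q) * A `^ q <= (A * D1) * A `^ E.
  have -> : D1 * s `^ (1 - q) * A `^ q = (A * D1) * A `^ (- (eta * (1 - q))).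
    rewrite /s -powRrM -mulrA -powRDp // [A * D1]mulrC -mulrA; congr (D1 * _).
    have -> : A * A `^ (- (eta * (1 - q))) = A `^ (1 + - (eta * (1 - q))).
      by rewrite powRDp // powRr1 // ltW.
    congr (_ `^ _); ring.
  apply: ler_wpM2l; first by rewrite mulr_ge0 // ltW.
  apply: ger_powR; first by rewrite A0 A1.
  rewrite /E lerN2 ler_wpM2l ?(ltW e0) //; lra.
have T2 : S2 * s * s `^ (1 - q) * A `^ q = (A ^+ 2 * S2) * A `^ E.
  rewrite /s -powRrM.
  have -> : S2 * A `^ (1 - eta) * A `^ ((1 - eta) * (1 - q)) * A `^ q =
      S2 * (A `^ (1 - eta) * A `^ ((1 - eta) * (1 - q)) * A `^ q) by ring.
  have -> : (A ^+ 2 * S2) * A `^ E = S2 * (A `^ 2 * A `^ E).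
    by rewrite -(powR_mulrn 2 (ltW A0)); ring.
  congr (S2 * _); rewrite -!powRDp //; congr (_ `^ _); rewrite /E; ring.
have AE0 : 0 <= A `^ E by rewrite powR_ge0.
have Y1 : (A * D1) `^ m1 = A `^ m1 * D1 `^ m1 by rewrite powRM // ltW.
have Y2 : (A ^+ 2 * S2) `^ m1 = A `^ (2 * m1) * S2 `^ m1.
  by rewrite powRM ?sqr_ge0 // -(powR_mulrn 2 (ltW A0)) -powRrM.
have SL := sum_le_powR (mulr_ge0 (ltW A0) D10) (mulr_ge0 (sqr_ge0 A) S20) m10.
rewrite Y1 Y2 in SL.
have LHS : p * (D1 + p * r * S2) * (2 * p * r) `^ (1 - q) * A `^ q <=
    2 * p ^+ 3 * ((A * D1) * A `^ E + (A ^+ 2 * S2) * A `^ E).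
  apply: (le_trans (y := p * (D1 + p * r * S2) * (2 * p * r `^ (1 - q)) * A `^ q)).
    apply: ler_wpM2r => //; apply: ler_wpM2l => //.
    apply: mulr_ge0; first by apply: le_trans p1.
    apply: addr_ge0 => //; apply: mulr_ge0 => //; apply: mulr_ge0 => //.
      by apply: le_trans p1.
    exact: ltW.
  rewrite -T2.
  have h1 : r `^ (1 - q) * D1 <= s `^ (1 - q) * D1 by rewrite ler_wpM2r.
  have h2 : r * r `^ (1 - q) * S2 <= s * s `^ (1 - q) * S2.
    by apply: ler_wpM2r => //; apply: ler_pM => //; exact: ltW.
  have h3 : 0 <= D1 * r `^ (1 - q) * A `^ q by rewrite !mulr_ge0.
  have h4 : 0 <= S2 * r * r `^ (1 - q) * A `^ q.
    by apply: mulr_ge0 => //; apply: mulr_ge0 => //; apply: mulr_ge0 => //; exact: ltW.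
  have h5 : D1 * r `^ (1 - q) * A `^ q <= (A * D1) * A `^ E.
    apply: le_trans T1; apply: ler_wpM2r => //; exact: ler_wpM2l.
  have h6 : S2 * r * r `^ (1 - q) * A `^ q <= S2 * s * s `^ (1 - q) * A `^ q.
    apply: ler_wpM2r => //; rewrite -[S2 * r * _]mulrA -[S2 * s * _]mulrA.
    apply: ler_wpM2l => //.
    by apply: ler_pM; [exact: ltW r0 | exact: rq0 | exact: rs | exact: e3].
  have p3 : p ^+ 3 = p * p * p by rewrite !exprS expr0 mulr1 mulrA.
  rewrite p3.
  have E1 : p * (D1 + p * r * S2) * (2 * p * r `^ (1 - q)) * A `^ q =
     2 * p * p * (D1 * r `^ (1 - q) * A `^ q) + 2 * p * p * p * (S2 * r * r `^ (1 - q) * A `^ q).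
    ring.
  rewrite E1.
  set a := D1 * r `^ (1 - q) * A `^ q in h3 h5 *.
  set b := S2 * r * r `^ (1 - q) * A `^ q in h4 h6 *.
  set X := A * D1 * A `^ E in h5 *.
  set Y := S2 * s * s `^ (1 - q) * A `^ q in h6 *.
  have p0 : 0 <= p by apply: le_trans p1.
  have pp : 1 <= p * p by rewrite -[1]mulr1 ler_pM.
  have ppp : p * p <= p * p * p by rewrite -[X in X <= _]mulr1 ler_wpM2l // (le_trans _ pp).
  have f1 : p * p * a <= p * p * p * a by rewrite ler_wpM2r.
  have f2 : p * p * p * a <= p * p * p * X.
    by rewrite ler_wpM2l // (le_trans _ ppp) // (le_trans _ pp).
  have f3 : p * p * p * b <= p * p * p * Y.
    by rewrite ler_wpM2l // (le_trans _ ppp) // (le_trans _ pp).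
  have -> : 2 * (p * p * p) * (X + Y) = 2 * (p * p * p * X) + 2 * (p * p * p * Y) by ring.
  have -> : 2 * p * p * a + 2 * p * p * p * b = 2 * (p * p * a) + 2 * (p * p * p * b) by ring.
  lra.
apply: (le_trans LHS).
set W := (A `^ m1 * D1 `^ m1 + A `^ (2 * m1) * S2 `^ m1) `^ m1^-1 in SL *.
have -> : A * D1 * A `^ E + A ^+ 2 * S2 * A `^ E = (A * D1 + A ^+ 2 * S2) * A `^ E by ring.
have -> : 4 * p ^+ 3 * A `^ E * W = 2 * p ^+ 3 * ((2 * W) * A `^ E) by ring.
apply: ler_wpM2l; first by rewrite mulr_ge0 // exprn_ge0 // (le_trans _ p1).
exact: ler_wpM2r.
Qed.
End Alg.

Section CTR.
Variable R : realType.
Variable p : nat.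

Lemma enorm_scale (c : R) (x : 'rV[R]_p) : enorm (c *: x) = `|c| * enorm x.
Proof.
rewrite /enorm -sqrtr_sqr -sqrtrM ?sqr_ge0 // mulr_sumr; congr Num.sqrt.
by apply: eq_bigr => i _; rewrite mxE exprMn.
Qed.

Lemma enorm_le_coords (v : 'rV[R]_p) m : 0 <= m -> (forall i, `|v 0 i| <= m) ->
  enorm v <= p%:R * m.
Proof.
move=> m0 hv; rewrite /enorm -(ger0_norm (mulr_ge0 (ler0n _ p) m0)) -sqrtr_sqr.
rewrite ler_sqrt ?sqr_ge0 //.
apply: (le_trans (y := \sum_(i < p) m ^+ 2)).
  apply: ler_sum => i _; rewrite -[v 0 i ^+ 2]real_normK ?num_real // !expr2.
  by apply: ler_pM; [exact: normr_ge0|exact: normr_ge0|exact: hv|exact: hv].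
rewrite sumr_const card_ord -[m ^+ 2 *+ p]mulr_natl exprMn; apply: ler_wpM2r; first exact: sqr_ge0.
case: p => [|n]; first by rewrite expr0n.
by rewrite expr2 ler_peMl // ler1n.
Qed.

Lemma cTR_bound (Theta : set 'rV[R]_p) (ts : 'rV[R]_p) (alpha : 'I_p -> R)
   (q eta R0 : R) (h : 'rV[R]_p -> R) (Bx : set 'rV[R]_p) (S2 : R) :
  0 < opnorm (diag_mx (\row_j alpha j)) <= 1 -> 0 < R0 <= 1 ->
  0 < eta <= 1 -> 0 < q <= 1 ->
  (forall z, box ts R0 z -> Bx z) -> (forall z, box ts R0 z -> Theta z) ->
  thrice_diff_on Bx h -> (forall z, Bx z -> dnorm2 h z <= S2) ->
  (0 <= cTR Theta ts alpha q eta R0 h)%E /\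
  (cTR Theta ts alpha q eta R0 h <=
   (p%:R * (dnorm1 h ts + p%:R * (R0 * opnorm (diag_mx (\row_j alpha j)) `^ (1 - eta)) * S2)
    * (2 * p%:R * (R0 * opnorm (diag_mx (\row_j alpha j)) `^ (1 - eta))) `^ (1 - q)
    * opnorm (diag_mx (\row_j alpha j)) `^ q)%:E)%E.
Proof.
set a := diag_mx (\row_j alpha j); set A := opnorm a.
move=> /andP[A0 A1] /andP[R00 R01] /andP[e0 e1] /andP[q0 q1] hB hT hd hS.
set r := R0 * A `^ (1 - eta).
have s1 : A `^ (1 - eta) <= 1.
  have h0 : 0 <= 1 - eta by lra.
  have A01 : 0 < A <= 1 by rewrite A0 A1.
  by have := ger_powR A01 h0; rewrite powRr0.
have r0 : 0 < r by rewrite mulr_gt0 // powR_gt0.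
have rR0 : r <= R0 by rewrite /r ler_piMr // ltW.
have Aeq : A = mxabs (\row_j alpha j) by rewrite /A /a opnorm_diag.
have boxU u : enorm (u *m a) < r -> box ts r (ts + u *m a).
  move=> hu i; rewrite !mxE addrC addrK.
  by apply: le_lt_trans hu; have := enorm_coord (u *m a) i; rewrite mxE.
have boxW z : box ts r z -> box ts R0 z.
  by move=> bz i; apply: lt_le_trans rR0.
have [j0 _|Hp] := pickP (@predT 'I_p); last first.
  by move: A0; rewrite Aeq /mxabs big_pred0 // ltxx.
rewrite /cTR /= -/a -/A -/r; split.
  set c := r / (2 * A).
  have c0 : 0 < c by rewrite divr_gt0 // mulr_gt0.
  set v : 'rV[R]_p := c *: delta_mx 0 j0.
  have ev : enorm (v *m a) < r.
    apply: (le_lt_trans (enorm_diag v _)); rewrite -Aeq /v enorm_scale enorm_delta.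
    rewrite mulr1 ger0_norm; last exact: ltW.
    have -> : A * c = r / 2 by rewrite /c; field; rewrite gt_eqF.
    lra.
  apply: le_trans (ereal_sup_ubound _); last first.
    exists 0, v; split.
    - apply/eqP => /rowP /(_ j0); rewrite !mxE !eqxx /= mulr1 => /esym/eqP.
      by rewrite gt_eqF.
    - split; last by rewrite mul0mx /enorm big1 ?sqrtr0 // => i _; rewrite mxE expr0n.
      by apply: subset_closure; rewrite mul0mx addr0; apply: hT; apply: boxW; exact: box_ts.
    - by split => //; apply: subset_closure; apply: hT; apply: boxW; exact: boxU.
    - reflexivity.
  by rewrite lee_fin divr_ge0 // powR_ge0.
apply: ge_ereal_sup => _ [u [v [uv [_ hu] [_ hv] ->]]].
rewrite lee_fin.
have bu := boxU _ hu; have bv := boxU _ hv.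
have L := lip_bound r0 (fun z bz => hB z (boxW z bz)) hd hS bu bv.
set x := ts + u *m a in L bu; set y := ts + v *m a in L bv.
have xy : x - y = (u - v) *m a by rewrite /x /y mulmxBl opprD addrACA subrr add0r.
set d := enorm (u - v).
have d0 : 0 < d by exact: enorm_pos.
set e := enorm (x - y) in L.
have e0' : 0 <= e by exact: enorm_ge0.
have eA : e <= A * d by rewrite /e xy Aeq; exact: enorm_diag.
have er : e <= p%:R * (2 * r).
  apply: enorm_le_coords; first by rewrite mulr_ge0 // ltW.
  move=> i; have hx := bu i; have hy := bv i.
  have -> : (x - y) 0 i = (x 0 i - ts 0 i) - (y 0 i - ts 0 i) by rewrite !mxE; ring.
  apply: (le_trans (ler_normB _ _)); lra.
set Lc := p%:R * (dnorm1 h ts + p%:R * r * S2) in L *.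
have S20 : 0 <= S2 := le_trans (sqrtr_ge0 _) (hS _ (hB _ (box_ts ts R00))).
have D10 : 0 <= dnorm1 h ts := sqrtr_ge0 _.
have Lc0 : 0 <= Lc.
  apply: mulr_ge0 => //; apply: addr_ge0 => //; apply: mulr_ge0 => //.
  by apply: mulr_ge0 => //; exact: ltW.
have ed : e / d `^ q <= (2 * p%:R * r) `^ (1 - q) * A `^ q.
  have dq0 : 0 < d `^ q by rewrite powR_gt0.
  rewrite ler_pdivrMr //.
  have -> : (2 * p%:R * r) `^ (1 - q) * A `^ q * d `^ q =
      (2 * p%:R * r) `^ (1 - q) * (A * d) `^ q.
    by rewrite (powRM q (ltW A0) (ltW d0)) mulrA.
  have [->|en0] := eqVneq e 0.
    by rewrite mulr_ge0 // powR_ge0.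
  have -> : e = e `^ (1 - q) * e `^ q.
    by rewrite -powRD ?en0 ?implybT // subrK powRr1.
  have h1 : e `^ (1 - q) <= (2 * p%:R * r) `^ (1 - q).
    apply: ge0_ler_powR; rewrite ?nnegrE ?subr_ge0 //.
      by apply: mulr_ge0; [apply: mulr_ge0 => //|exact: ltW].
    by apply: (le_trans er); rewrite mulrA (mulrC p%:R 2).
  have h2 : e `^ q <= (A * d) `^ q.
    apply: ge0_ler_powR; rewrite ?nnegrE //; first exact: ltW.
    by apply: mulr_ge0; exact: ltW.
  exact: (ler_pM (powR_ge0 _ _) (powR_ge0 _ _) h1 h2).
have -> : `|h x - h y| / d `^ q = `|h x - h y| * (d `^ q)^-1 by [].
apply: (le_trans (y := Lc * e * (d `^ q)^-1)).
  by apply: ler_wpM2r => //; rewrite invr_ge0 powR_ge0.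
rewrite -mulrA -[X in _ <= X]mulrA; apply: ler_wpM2l => //.
Qed.

End CTR.

Section NM.
Local Open Scope ereal_scope.
Variable R : realType.
Variables (d : measure_display) (T : measurableType d) (mu : {measure set T -> \bar R}).

Lemma le_integral_nm (f1 f2 : T -> \bar R) :
  (forall x, 0 <= f1 x) -> (forall x, f1 x <= f2 x) ->
  \int[mu]_x f1 x <= \int[mu]_x f2 x.
Proof.
move=> f10 f12.
have f20 x : 0 <= f2 x by exact: le_trans (f10 x) (f12 x).
rewrite /integral; apply: leeB.
  apply: le_ereal_sup => _ [h /= Ph <-]; exists h => //= x.
  apply: le_trans (Ph x) _.
  rewrite !funeposE /patch /= mem_set //.
  by rewrite ge_max !le_max f12 lexx orbT.
apply: le_ereal_sup => _ [h /= Ph <-]; exists h => //= x.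
apply: le_trans (Ph x) _.
rewrite !funenegE /patch /= mem_set //.
rewrite ge_max !le_max lexx !orbT andbT; apply/orP; right.
by rewrite leeNl oppe0 f20.
Qed.

Lemma meas_if_N (N : set T) (f2 : T -> \bar R) : measurable N ->
  measurable_fun setT f2 ->
  measurable_fun setT (fun x => if x \in N then +oo else f2 x).
Proof.
move=> mN mf _ B mB; rewrite setTI.
have mf2 : measurable (f2 @^-1` B) by have := mf measurableT B mB; rewrite setTI.
have [Binf|Binf] := pselect (B +oo).
- have -> : (fun x => if x \in N then +oo else f2 x) @^-1` B =
      N `|` (~` N `&` f2 @^-1` B).
    apply/seteqP; split => x /=; case: ifPn => [/set_mem xN|/negP xN].
    + by move=> _; left.
    + by move=> fx; right; split => // Nx; apply: xN; exact: mem_set.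
    + by move=> _.
    + by case => [Nx|[]//]; exfalso; apply: xN; exact: mem_set.
  by apply: measurableU => //; apply: measurableI => //; exact: measurableC.
- have -> : (fun x => if x \in N then +oo else f2 x) @^-1` B =
      ~` N `&` f2 @^-1` B.
    apply/seteqP; split => x /=; case: ifPn => [/set_mem xN|/negP xN].
    + by [].
    + by move=> fx; split => // Nx; apply: xN; exact: mem_set.
    + by case.
    + by case.
  by apply: measurableI => //; exact: measurableC.
Qed.

Lemma le_integral_ae_nm (f1 f2 : T -> \bar R) :
  (forall x, 0 <= f1 x) -> (forall x, 0 <= f2 x) -> measurable_fun setT f2 ->
  {ae mu, forall x, f1 x <= f2 x} ->
  \int[mu]_x f1 x <= \int[mu]_x f2 x.
Proof.
move=> f10 f20 mf2 [N [mN muN sub]].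
set f3 := fun x => if x \in N then +oo else f2 x.
have mf3 : measurable_fun setT f3 by exact: meas_if_N.
apply: (le_trans (y := \int[mu]_x f3 x)).
  apply: le_integral_nm => // x; rewrite /f3; case: ifPn => [_|/negP xN].
    exact: leey.
  apply: contrapT => H; apply: xN; apply/mem_set; apply: sub => /= H'.
  exact: H (H' ).
rewrite (le_eqVlt); apply/orP; left; apply/eqP.
apply: ae_eq_integral => //.
exists N; split => // x /= H; apply: contrapT => xN; apply: H => _.
by rewrite /f3; case: ifPn => // /set_mem.
Qed.
End NM.

Section GM.
Variable R : realType.

Lemma Gmat_diag p (ts : 'rV[R]_p) q (xi alpha : 'I_p -> R) :
  (forall j, alpha j != 0) ->
  Gmat ts q xi alpha = diag_mx (\row_j ((alpha j)^-1 *
     (if ts 0 j == 0 then powR (xi j) (- q^-1) else alpha j))).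
Proof.
move=> ha; rewrite /Gmat /atilde.
set a := \row_j alpha j; set ai := \row_j (alpha j)^-1.
have H : diag_mx a *m diag_mx ai = 1%:M.
  rewrite mulmx_diag -diag_const_mx; congr diag_mx; apply/rowP => j.
  by rewrite !mxE mulfV.
have [Du _] := mulmx1_unit H.
have -> : invmx (diag_mx a) = diag_mx ai.
  by rewrite -[invmx _]mulmx1 -H mulmxA mulVmx // mul1mx.
by rewrite mulmx_diag; congr diag_mx; apply/rowP => j; rewrite !mxE.
Qed.

Lemma G00_diag p (ts : 'rV[R]_p) q (xi alpha : 'I_p -> R) :
  (forall j, alpha j != 0) ->
  G00 ts q xi alpha = diag_mx (\row_i
    ((alpha (enum_val i))^-1 * powR (xi (enum_val i)) (- q^-1))).
Proof.
move=> ha; rewrite /G00 Gmat_diag //; apply/matrixP => i j; rewrite !mxE.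
have Ji : enum_val i \in J0 ts by exact: enum_valP.
move: (Ji); rewrite inE => /eqP ->; rewrite eqxx.
have [->|ij] := eqVneq i j; first by rewrite !eqxx.
have -> : (enum_val i == enum_val j) = false.
  by apply/negbTE; apply: contra ij => /eqP /enum_val_inj ->.
by [].
Qed.

Variables (d : measure_display) (Omega : measurableType d).

Lemma measurable_bigmax n (F : Omega -> 'I_n -> R) (s : seq 'I_n) :
  (forall j, measurable_fun setT (fun w => F w j)) ->
  measurable_fun setT (fun w => \big[Num.max/0]_(j <- s) `|F w j|).
Proof.
move=> mF; elim: s => [|j s IH].
  by under eq_fun do rewrite big_nil; exact: measurable_cst.
under eq_fun do rewrite big_cons.
apply: (measurable_maxr (f := fun w => `|F w j|)) => //.
exact: measurableT_comp (@normr_measurable R _) (mF j).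
Qed.

Lemma measurable_mxabs n (F : Omega -> 'I_n -> R) :
  (forall j, measurable_fun setT (fun w => F w j)) ->
  measurable_fun setT (fun w => mxabs (\row_j F w j)).
Proof.
move=> mF; rewrite /mxabs.
under eq_fun do under eq_bigr do rewrite mxE.
exact: measurable_bigmax.
Qed.
End GM.

Unset Implicit Arguments. Set Strict Implicit.

Theorem proposition6
  (R : realType) (d : measure_display) (Omega : measurableType d)
  (P : probability Omega R) (p : nat)
  (Theta : set 'rV[R]_p) (ts : 'rV[R]_p) (TT : set R)
  (H : R -> Omega -> 'rV[R]_p -> R) (xi : R -> Omega -> 'I_p -> R)
  (alpha : R -> 'I_p -> R) (q eta R0s m1 : R)
  (* standing assumptions *)
  (hTh_open : open Theta) (hTh_bdd : bounded_set Theta) (hts : Theta ts)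
  (hTT0 : forall T, TT T -> 0 <= T)
  (hTTsup : forall M : R, exists T, TT T /\ M < T)
  (hHmeas : forall T x, TT T -> closure Theta x ->
     measurable_fun setT (fun w => H T w x))
  (hHcont : forall T w, TT T -> {within closure Theta, continuous (H T w)})
  (hxi_pos : forall T w j, TT T -> 0 < xi T w j)
  (hxi_meas : forall T j, TT T -> measurable_fun setT (fun w => xi T w j))
  (halpha : forall T j, TT T -> alpha T j != 0)
  (halpha_lim : forall e : R, 0 < e -> exists T0 : R, forall T, TT T ->
     T0 <= T -> opnorm (diag_mx (\row_j alpha T j)) < e)
  (* parameters *)
  (hq : 0 < q <= 1) (heta : 0 < eta <= 1) (hR0s : 0 < R0s) (hm1 : 0 < m1)
  (* [A12] (i) *)
  (hA12i : forall T, TT T ->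
     {ae P, forall w, thrice_diff_on
        [set x | Theta x /\ (enorm (x - ts) < R0s)%R] (H T w)})
  (* [A12] (ii) *)
  (hA12ii_meas : forall T, TT T -> measurable_fun setT (fun w : Omega => (
     (powR (opnorm (diag_mx (\row_j alpha T j))) m1
      * powR (dnorm1 (H T w) ts) m1)%:E : \bar R)))
  (hA12ii : exists M : R, forall T, TT T ->
     (\int[P]_w ((powR (opnorm (diag_mx (\row_j alpha T j))) m1
                 * powR (dnorm1 (H T w) ts) m1)%:E) <= M%:E)%E)
  (* [A12] (iii) *)
  (hA12iii_meas : forall T, TT T -> measurable_fun setT (fun w : Omega => (
     ((powR (opnorm (diag_mx (\row_j alpha T j))) (2 * m1))%:E
      * poweR (ereal_sup [set (dnorm2 (H T w) x)%:E
                         | x in [set x | Theta x /\ (enorm (x - ts) < R0s)%R]]) m1)%E : \bar R)))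
  (hA12iii : exists M : R, forall T, TT T ->
     (\int[P]_w ((powR (opnorm (diag_mx (\row_j alpha T j))) (2 * m1))%:E
      * poweR (ereal_sup [set (dnorm2 (H T w) x)%:E
                         | x in [set x | Theta x /\ (enorm (x - ts) < R0s)%R]]) m1)
      <= M%:E)%E)
  (* [A12] (iv) *)
  (hA12iv_meas : forall T, TT T -> measurable_fun setT (fun w : Omega => (
     ((powR (opnorm (diag_mx (\row_j alpha T j))) (2 * m1))%:E
      * poweR (ereal_sup [set (dnorm3 (H T w) x)%:E
                         | x in [set x | Theta x /\ (enorm (x - ts) < R0s)%R]]) m1)%E : \bar R)))
  (hA12iv : exists M : R, forall T, TT T ->
     (\int[P]_w ((powR (opnorm (diag_mx (\row_j alpha T j))) (2 * m1))%:E
      * poweR (ereal_sup [set (dnorm3 (H T w) x)%:E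
                         | x in [set x | Theta x /\ (enorm (x - ts) < R0s)%R]]) m1)
      <= M%:E)%E) :
  forall m2 : R, 0 < m2 ->
  exists R0 K : R, 0 < R0 /\ 0 < K /\
  forall T, TT T -> opnorm (diag_mx (\row_j alpha T j)) <= 1 ->
    (cT P Theta ts (alpha T) (xi T) (H T) q eta
        (m1 * m2 / (q * m1 + m2)) R0
     <= (K * powR (opnorm (diag_mx (\row_j alpha T j)))
                  (- (eta * (2 - q) * m1 * m2 / (q * m1 + m2))))%:E
        * poweR (\int[P]_w (powR (opnorm (G00 ts q (xi T w) (alpha T))) m2)%:E)
                (q * m1 / (q * m1 + m2)))%E.
Proof.
move=> m2 m20.
have m1D : 0 < q * m1 + m2 by rewrite addr_gt0 // mulr_gt0 //; case/andP: hq.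
set m := m1 * m2 / (q * m1 + m2).
have m0 : 0 < m by rewrite /m divr_gt0 // mulr_gt0.
have q0 : 0 < q by case/andP: hq.
have qm0 : q * m != 0 by rewrite mulf_neq0 // gt_eqF.
have [j0 _|Hp] := pickP (@predT 'I_p); last first.
  exists 1, 1; split => //; split => // T hT _.
  rewrite /cT.
  under eq_integral => w _.
    rewrite G00_diag; last by move=> j; exact: (halpha _ _ hT).
    rewrite opnorm_diag.
    rewrite [mxabs _](_ : _ = 0); last first.
      by rewrite /mxabs; elim/big_rec: _ => [//|i x _ ->]; have := Hp (enum_val i).
    rewrite powR0 // mule0.
    over.
  rewrite integral0; apply: mule_ge0; last exact: poweR_ge0.
  by rewrite lee_fin mulr_ge0 // powR_ge0.
have p1 : 1 <= p%:R :> R.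
  by rewrite ler1n; exact: (leq_ltn_trans (leq0n _) (ltn_ord j0)).
have p0 : 0 < p%:R :> R by apply: lt_le_trans p1.
have nT : nbhs ts Theta := open_nbhs_nbhs (conj hTh_open hts).
move/nbhs_ballP: nT => [e e0 be].
set R0 := Num.min 1 (Num.min e (R0s / (2 * p%:R))).
have R00 : 0 < R0.
  by rewrite /R0 !lt_min ltr01 e0 /= divr_gt0 // mulr_gt0.
have R01 : R0 <= 1 by rewrite /R0 ge_min lexx.
have R0e : R0 <= e by rewrite /R0 !ge_min lexx orbT.
have R0R : R0 <= R0s / (2 * p%:R) by rewrite /R0 !ge_min lexx !orbT.
set Bx := [set x : 'rV[R]_p | Theta x /\ (enorm (x - ts) < R0s)%R].
have hBT z : box ts R0 z -> Theta z.
  move=> bz; apply: be; split => // i j; rewrite ord1.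
  by have := bz j; rewrite /ball /= distrC => h; apply: lt_le_trans h R0e.
have hB z : box ts R0 z -> Bx z.
  move=> bz; split; first exact: hBT.
  apply: (le_lt_trans (enorm_le_coords (m := R0) _ _)); first exact: ltW.
    by move=> i; rewrite !mxE; apply: ltW; exact: bz.
  apply: (le_lt_trans (y := p%:R * (R0s / (2 * p%:R)))).
    by rewrite ler_wpM2l // ltW.
  have -> : p%:R * (R0s / (2 * p%:R)) = R0s / 2 by field; rewrite gt_eqF.
  lra.
have [M1 hM1] := hA12ii.
have [M2 hM2] := hA12iii.
set C0 : R := 4 * p%:R ^+ 3.
have C00 : 0 < C0 by rewrite mulr_gt0 // exprn_gt0.
set Mt : R := 1 + `|M1| + `|M2|.
have Mt0 : 0 < Mt by rewrite /Mt; have := normr_ge0 M1; have := normr_ge0 M2; lra.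
exists R0, (C0 `^ m * Mt `^ (m / m1)); split => //; split.
  by rewrite mulr_gt0 // powR_gt0.
move=> T hT A1.
set a := diag_mx (\row_j alpha T j).
set A := opnorm a.
have hal : forall j, alpha T j != 0 by move=> j; exact: (halpha _ _ hT).
have A0 : 0 < A.
  rewrite /A /a opnorm_diag; apply: lt_le_trans (mxabs_ub _ j0).
  by rewrite mxE normr_gt0.
set E := - (eta * (2 - q)).
set X1 := fun w => powR A m1 * powR (dnorm1 (H T w) ts) m1.
set S2e := fun w => ereal_sup [set (dnorm2 (H T w) x)%:E | x in Bx].
set U2 := fun w => ((powR A (2 * m1))%:E * poweR (S2e w) m1)%E.
set X2 := fun w => fine (U2 w).
set Z := fun w => C0 * A `^ E * (X1 w + X2 w) `^ m1^-1.
set g := fun w => opnorm (G00 ts q (xi T w) (alpha T)).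
have mX1 : measurable_fun setT X1 := (measurable_EFinP _ _).1 (hA12ii_meas T hT).
have mU2 : measurable_fun setT U2 := hA12iii_meas T hT.
have mX2 : measurable_fun setT X2.
  exact: measurableT_comp (fine_measurable measurableT) mU2.
have mZ : measurable_fun setT Z.
  apply: measurable_funM; first exact: measurable_cst.
  exact: measurableT_comp (measurable_powR _) (measurable_funD mX1 mX2).
have geq : g = fun w => mxabs (\row_(i < #|J0 ts|)
      ((alpha T (@enum_val _ (mem (J0 ts)) i))^-1 *
        powR (xi T w (@enum_val _ (mem (J0 ts)) i)) (- q^-1))).
  by apply: boolp.funext => w; rewrite /g G00_diag // opnorm_diag.
have mg : measurable_fun setT g.
  rewrite geq; apply: measurable_mxabs => i.
  apply: measurable_funM; first exact: measurable_cst.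
  exact: measurableT_comp (measurable_powR _) (hxi_meas T _ hT).
have X10 w : 0 <= X1 w by rewrite mulr_ge0 // powR_ge0.
have U20 w : (0 <= U2 w)%E by rewrite mule_ge0 // ?lee_fin ?powR_ge0 // poweR_ge0.
have X20 w : 0 <= X2 w by rewrite /X2 fine_ge0.
have Z0 w : 0 <= Z w.
  by apply: mulr_ge0; [apply: mulr_ge0; [exact: ltW | exact: powR_ge0] | exact: powR_ge0].
have g0 w : 0 <= g w by rewrite geq mxabs_ge0.
have intU2 : P.-integrable setT U2.
  apply/integrableP; split => //.
  under eq_integral => w _ do rewrite gee0_abs //.
  exact: le_lt_trans (hM2 T hT) (ltey _).
have aefin := integrable_ae measurableT intU2.
have aediff := hA12i T hT.
have ae_bound : {ae P, forall w,
    (poweR `|cTR Theta ts (alpha T) q eta R0 (H T w)| m * (powR (g w) (q * m))%:E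
     <= ((Z w `^ m) * (g w `^ (q * m)))%:E)%E}.
  apply: filterS2 aefin aediff => w /(_ I) U2fin hd.
  set h := H T w in hd *.
  have tsB : Bx ts by apply: hB; exact: box_ts.
  have S2ge : ((dnorm2 h ts)%:E <= S2e w)%E.
    by apply: ereal_sup_ubound; exists ts.
  have S2e0 : (0 <= S2e w)%E.
    by apply: le_trans S2ge; rewrite lee_fin /dnorm2 sqrtr_ge0.
  have S2fin : S2e w \is a fin_num.
    rewrite ge0_fin_numE // ltNge leye_eq; apply/negP => /eqP Hinf.
    by move: U2fin; rewrite /U2 Hinf poweRyr ?gt_eqF // muleC gt0_mulye ?lte_fin ?powR_gt0.
  set S2 := fine (S2e w).
  have S20 : 0 <= S2 by exact: fine_ge0.
  have hS z : Bx z -> dnorm2 h z <= S2.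
    by move=> Bz; rewrite -lee_fin /S2 (fineK S2fin); apply: ereal_sup_ubound; exists z.
  have X2eq : X2 w = A `^ (2 * m1) * S2 `^ m1.
    by rewrite /X2 /U2 -[S2e w](fineK S2fin) poweR_EFin.
  have A01 : 0 < A <= 1 by rewrite A0 A1.
  have R001 : 0 < R0 <= 1 by rewrite R00 R01.
  have [c0 cle] := @cTR_bound R p Theta ts (alpha T) q eta R0 h Bx S2
     A01 R001 heta hq hB hBT hd hS.
  have D10 : 0 <= dnorm1 h ts by exact: sqrtr_ge0.
  have alg := @alg_bound R A R0 eta q m1 p%:R (dnorm1 h ts) S2 A01 R001
     heta hq hm1 p1 D10 S20.
  have cZ : (cTR Theta ts (alpha T) q eta R0 h <= (Z w)%:E)%E.
    apply: le_trans cle _; rewrite lee_fin /Z X2eq /C0.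
    exact: alg.
  rewrite EFinM; apply: lee_wpmul2r; first by rewrite lee_fin powR_ge0.
  rewrite gee0_abs // -poweR_EFin.
  apply: gt0_ler_poweR; first exact: ltW.
  - by rewrite in_itv /= c0 leey.
  - by rewrite in_itv /= lee_fin Z0 leey.
  - exact: cZ.
set fZ := fun w => Z w `^ m.
set fg := fun w => g w `^ (q * m).
have mfZ : measurable_fun setT fZ := measurableT_comp (measurable_powR _) mZ.
have mfg : measurable_fun setT fg := measurableT_comp (measurable_powR _) mg.
have m1n0 : m1 != 0 by rewrite gt_eqF.
have m2n0 : m2 != 0 by rewrite gt_eqF.
have qn0 : q != 0 by rewrite gt_eqF.
have Dn0 : q * m1 + m2 != 0 by rewrite gt_eqF.
have mn0 : m != 0 by rewrite gt_eqF.
set r1 := m1 / m.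
set r2 := m2 / (q * m).
have r10 : 0 < r1 by rewrite divr_gt0.
have r20 : 0 < r2 by rewrite divr_gt0 // mulr_gt0.
have r1i : r1^-1 = m / m1 by rewrite /r1 invf_div.
have r2i : r2^-1 = q * m1 / (q * m1 + m2).
  by rewrite /r2 invf_div /m; field; rewrite ?m1n0 ?m2n0 ?qn0 ?Dn0.
have cj : r1^-1 + r2^-1 = 1.
  by rewrite r1i r2i /m; field; rewrite ?m1n0 ?m2n0 ?qn0 ?Dn0.
have Hold := hoelder P mfZ mfg r10 r20 cj.
set CA := C0 * A `^ E.
have CA0 : 0 <= CA by rewrite mulr_ge0 ?powR_ge0 // ltW.
have ZE w : Z w `^ m1 = CA `^ m1 * (X1 w + X2 w).
  rewrite /Z -/CA powRM ?powR_ge0 // -powRrM mulVf // powRr1 //.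
  by rewrite addr_ge0.
have intZ : (\int[P]_w (Z w `^ m1)%:E <= (CA `^ m1 * Mt)%:E)%E.
  have -> : (\int[P]_w (Z w `^ m1)%:E =
      \int[P]_w ((CA `^ m1)%:E * (X1 w + X2 w)%:E))%E.
    by apply: eq_integral => w _; rewrite ZE EFinM.
  have n12 : forall w, setT w -> (0 <= (X1 w + X2 w)%:E)%E.
    by move=> w _; rewrite lee_fin addr_ge0.
  have m12 : measurable_fun setT (fun w => (X1 w + X2 w)%:E).
    by apply/measurable_EFinP; exact: measurable_funD.
  rewrite (ge0_integralZl_EFin _ measurableT n12 m12 (powR_ge0 CA m1)).
  rewrite EFinM; apply: lee_wpmul2l; first by rewrite lee_fin powR_ge0.
  have -> : (\int[P]_w (X1 w + X2 w)%:E =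
      \int[P]_w ((X1 w)%:E + (X2 w)%:E))%E.
    by apply: eq_integral => w _; rewrite EFinD.
  rewrite ge0_integralD //; last 4 first.
    - by move=> w _; rewrite lee_fin.
    - exact/measurable_EFinP.
    - by move=> w _; rewrite lee_fin.
    - exact/measurable_EFinP.
  have i1 : (\int[P]_w (X1 w)%:E <= `|M1|%:E)%E.
    apply: (le_trans (y := M1%:E)); first exact: (hM1 T hT).
    rewrite lee_fin; exact: ler_norm.
  have i2 : (\int[P]_w (X2 w)%:E <= `|M2|%:E)%E.
    apply: (le_trans (y := M2%:E)); last by rewrite lee_fin; exact: ler_norm.
    apply: (le_trans (y := (\int[P]_w U2 w)%E)); last exact: (hM2 T hT).
    apply: ge0_le_integral => //.
    - by move=> w _; rewrite lee_fin.
    - exact/measurable_EFinP.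
    - move=> w _; rewrite /X2; move: (U20 w); case: (U2 w) => [r _| _ | H0] /=.
      + exact: lexx.
      + exact: leey.
      + by move: H0; rewrite leeNy_eq.
  apply: le_trans (leeD i1 i2) _.
  rewrite -EFinD lee_fin /Mt; lra.
have NpE : Lnorm P r1%:E (EFin \o fZ) = ((\int[P]_w (Z w `^ m1)%:E) `^ r1^-1)%E.
  rewrite unlock; congr (_ `^ _)%E; apply: eq_integral => w _.
  rewrite /= ger0_norm; last exact: powR_ge0.
  by rewrite -powRrM /r1 [m * _]mulrC divfK.
have NqE : Lnorm P r2%:E (EFin \o fg) =
    ((\int[P]_w (powR (g w) m2)%:E) `^ (q * m1 / (q * m1 + m2)))%E.
  rewrite unlock -r2i; congr (_ `^ _)%E; apply: eq_integral => w _.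
  rewrite /= ger0_norm; last exact: powR_ge0.
  by rewrite -powRrM /r2 [q * m * _]mulrC divfK.
have Np_bd : (Lnorm P r1%:E (EFin \o fZ) <= ((CA `^ m) * Mt `^ (m / m1))%:E)%E.
  rewrite NpE.
  have ri0 : 0 <= r1^-1 by rewrite invr_ge0 ltW.
  have i0 : (0 <= \int[P]_w (Z w `^ m1)%:E)%E.
    by apply: integral_ge0 => w _; rewrite lee_fin powR_ge0.
  have h0 : (0 <= (CA `^ m1 * Mt)%:E)%E by rewrite lee_fin mulr_ge0 ?powR_ge0 // ltW.
  apply: (le_trans (gt0_ler_poweR ri0 _ _ intZ)).
  - by rewrite in_itv /= i0 leey.
  - by rewrite in_itv /= h0 leey.
  rewrite poweR_EFin lee_fin powRM ?powR_ge0 ?(ltW Mt0) // -powRrM r1i.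
  have -> : m1 * (m / m1) = m by field.
  exact: lexx.
apply: (le_trans (y := (\int[P]_w ((fZ w * fg w)%:E))%E)).
  apply: le_integral_ae_nm.
  - move=> w; apply: mule_ge0; first exact: poweR_ge0.
    by rewrite lee_fin powR_ge0.
  - by move=> w; rewrite lee_fin mulr_ge0 // powR_ge0.
  - exact/measurable_EFinP/measurable_funM.
  - exact: ae_bound.
have N1E : (\int[P]_w ((fZ w * fg w)%:E))%E = Lnorm P 1 (EFin \o (fZ \* fg)).
  rewrite Lnorm1; apply: eq_integral => w _.
  by rewrite /= ger0_norm // mulr_ge0 // powR_ge0.
rewrite N1E; apply: (le_trans Hold).
rewrite NqE.
have KE : C0 `^ m * Mt `^ (m / m1) *
    A `^ (- (eta * (2 - q) * m1 * m2 / (q * m1 + m2))) = CA `^ m * Mt `^ (m / m1).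
  rewrite /CA powRM ?powR_ge0 ?(ltW C00) // -powRrM.
  have -> : E * m = - (eta * (2 - q) * m1 * m2 / (q * m1 + m2)) by rewrite /E /m; ring.
  ring.
rewrite KE; apply: lee_wpmul2r; first exact: poweR_ge0.
exact: Np_bd.
Qed.
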